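(* Let $\mathbb V$ be a Schubert representation of $\widehat H_n$ with generic Schubert classes $\{\mathcal Y_w\}$ and evaluation map $\operatorname{ev}$. For $u,v\in S_n$, $\operatorname{ev}(\overline T_u\cdot\mathcal Y_v)=\operatorname{ev}(\mathcal Y_{\mathrm{id}})$ if $u=v$ and $=0$ otherwise. Moreover, for every $\mathcal Y\in\mathbb V$, $$\mathcal Y=\frac{1}{\operatorname{ev}(\mathcal Y_{\mathrm{id}})}\sum_{w\in S_n}\operatorname{ev}(\overline T_w\cdot\mathcal Y)\,\mathcal Y_w.$$
   Context: $\mathcal A_\hbar=\mathbb Q[p,q,\hbar]$. The affine Hecke algebra $\widehat H_n$ over $\mathcal A_\hbar$ is generated by $T_1,\dots,T_{n-1}$, $x_1,\dots,x_n$ with relations $(T_i+p)(T_i-q)=0$, the braid relations $T_iT_j=T_jT_i$ ($|i-j|>1$), $T_iT_{i+1}T_i=T_{i+1}T_iT_{i+1}$, $x_ix_j=x_jx_i$, $T_ix_j=x_jT_i$ ($j\ne i,i+1$), $T_ix_i=x_{i+1}T_i+(\hbar-(p-q)x_i)$, $T_ix_{i+1}=x_iT_i-(\hbar-(p-q)x_i)$. For a reduced word $w=s_{i_1}\cdots s_{i_\ell}$, $T_w=T_{i_1}\cdots T_{i_\ell}$, and $\overline T_w=\overline T_{i_1}\cdots\overline T_{i_\ell}$ with $\overline T_i=T_i+p-q$. A Schubert representation: a field $\mathbb F$ with $t_1,\dots,t_n\in\mathbb F$, a ring map $\mathcal A_\hbar\to\mathbb F$, an $\mathbb F$-vector space $\mathbb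 V$ with a $\widehat H_n$-action in which $\mathcal A_\hbar$ acts through $\mathbb F$, a distinguished $\mathcal Y_{w_0}$ ($w_0$ longest in $S_n$) such that $\mathcal Y_w:=T_{w^{-1}w_0}\cdot\mathcal Y_{w_0}$ form a basis, and an $\mathbb F$-linear $\operatorname{ev}\colon\mathbb V\to\mathbb F$ with $\operatorname{ev}(\mathcal Y_w)\ne0\iff w=\mathrm{id}$ and $\operatorname{ev}(x_i\cdot\mathcal Y_w)=t_i\operatorname{ev}(\mathcal Y_w)$. *)

(* Defs.v *)
From HB Require Import structures.
From mathcomp Require Import all_boot all_order all_algebra all_fingroup.
Set Implicit Arguments. Unset Strict Implicit. Unset Printing Implicit Defensive.
Import GRing.Theory.
Local Open Scope ring_scope.

Section Schubert.
Variable n : nat.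

(* generator indices: i : 'I_n.-1 stands for s_{i+1} = (i, i+1) (0-based) *)
Lemma ordl_proof (i : 'I_n.-1) : (i < n)%N.
Proof. have := ltn_ord i; case: n i => [|m] i //= hi; exact: ltnW. Qed.
Lemma ordr_proof (i : 'I_n.-1) : (i.+1 < n)%N.
Proof. have := ltn_ord i; case: n i => [|m] i //=. Qed.

Definition ordl (i : 'I_n.-1) : 'I_n := Ordinal (ordl_proof i).
Definition ordr (i : 'I_n.-1) : 'I_n := Ordinal (ordr_proof i).

Definition sgen (i : 'I_n.-1) : 'S_n := tperm (ordl i) (ordr i).

Definition wordprod (s : seq 'I_n.-1) : 'S_n :=
  foldr (fun i w => (sgen i * w)%g) 1%g s.

Definition coxlen (w : 'S_n) : nat :=
  #|[set ij : 'I_n * 'I_n | (ij.1 < ij.2)%N && (w ij.2 < w ij.1)%N]|.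

Definition w0 : 'S_n := perm (@rev_ord_inj n).

Definition rword (w : 'S_n) : seq 'I_n.-1 :=
  match [pick t : (coxlen w).-tuple 'I_n.-1 | wordprod t == w] with
  | Some t => val t
  | None => [::]
  end.

Definition wordop (V : Type) (T : 'I_n.-1 -> V -> V) (s : seq 'I_n.-1) : V -> V :=
  foldr (fun i f => T i \o f) id s.

Definition Tperm (V : Type) (T : 'I_n.-1 -> V -> V) (w : 'S_n) : V -> V :=
  wordop T (rword w).

End Schubert.

Definition Tbar (F : fieldType) (V : lmodType F) n (p q : F)
  (T : 'I_n.-1 -> V -> V) : 'I_n.-1 -> V -> V :=
  fun i v => T i v + (p - q) *: v.

Definition Ycl (F : fieldType) (V : lmodType F) n
  (T : 'I_n.-1 -> V -> V) (Yw0 : V) (w : 'S_n) : V :=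
  Tperm T ((w^-1) * w0 n)%g Yw0.

(* Main.v *)
Require Import Defs.
From HB Require Import structures.
From mathcomp Require Import all_boot all_order all_algebra all_fingroup zify.
Set Implicit Arguments. Unset Strict Implicit. Unset Printing Implicit Defensive.
Import GRing.Theory.

Definition sw (i k : nat) := if k == i then i.+1 else if k == i.+1 then i else k.
Ltac noif t := match t with context [if _ then _ else _] => fail 1 | _ => idtac end.
Ltac swt := rewrite /sw;
  repeat match goal with
  | |- context [if ?a == ?b then _ else _] => is_var a; case: (a =P b) => ? /=; try subst a
  end;
  repeat (rewrite ?eqxx /=; match goal with
  | |- context [if ?a == ?b then _ else _] => noif a; noif b; case: (a =P b) => ? /=
  end); lia.

Lemma sgenE n (i : 'I_n.-1) (x : 'I_n) : val (sgen i x) = sw i x.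
Proof.
rewrite /sgen /sw; case: tpermP => [->|->|/eqP hl /eqP hr] /=.
- by rewrite eqxx.
- by rewrite ifN //= ?eqxx // neq_ltn ltnSn orbT.
- have hl' : (val x == i) = false by apply/negbTE; apply: contra hl => /eqP h; apply/eqP/val_inj.
  have hr' : (val x == i.+1) = false by apply/negbTE; apply: contra hr => /eqP h; apply/eqP/val_inj.
  by rewrite hl' hr'.
Qed.

Lemma sw_pair i a b : a <> b ->
  ((a < b)%N /\ ~ (a = i /\ b = i.+1)) <-> ((sw i a < sw i b)%N /\ ~ (sw i a = i /\ sw i b = i.+1)).
Proof. move=> h; split; swt. Qed.


Lemma sw_far i j k : (i.+1 < j)%N || (j.+1 < i)%N -> sw i (sw j k) = sw j (sw i k).
Proof. move=> h. swt. Qed.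
Lemma sw_braid i k : sw i (sw i.+1 (sw i k)) = sw i.+1 (sw i (sw i.+1 k)).
Proof. swt. Qed.

Lemma sgen_far n (i j : 'I_n.-1) : (i.+1 < j)%N || (j.+1 < i)%N ->
  (sgen i * sgen j = sgen j * sgen i)%g.
Proof. move=> h; apply/permP => x; apply: val_inj; rewrite !permM !sgenE; symmetry; exact: sw_far. Qed.

Lemma sgen_braid n (i j : 'I_n.-1) : val j = (val i).+1 ->
  (sgen i * sgen j * sgen i = sgen j * sgen i * sgen j)%g.
Proof. move=> h; apply/permP => x; apply: val_inj; rewrite !permM !sgenE h; exact: sw_braid. Qed.

Lemma sgen2 n (i : 'I_n.-1) : (sgen i * sgen i = 1)%g.
Proof. exact: tperm2. Qed.

Lemma sgenV n (i : 'I_n.-1) : ((sgen i)^-1 = sgen i)%g.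
Proof. exact: tpermV. Qed.

Lemma sgenK n (i : 'I_n.-1) (y : 'S_n) : (sgen i * (sgen i * y) = y)%g.
Proof. by rewrite mulgA sgen2 mul1g. Qed.

Lemma sgen_braidK n (i j : 'I_n.-1) (y : 'S_n) : val j = (val i).+1 ->
  (sgen i * (sgen j * (sgen i * y)) = sgen j * (sgen i * (sgen j * y)))%g.
Proof. by move=> h; rewrite !mulgA (sgen_braid h). Qed.

Lemma sgen_farK n (i j : 'I_n.-1) (y : 'S_n) : (i.+1 < j)%N || (j.+1 < i)%N ->
  (sgen i * (sgen j * y) = sgen j * (sgen i * y))%g.
Proof. by move=> h; rewrite !mulgA (sgen_far h). Qed.

Lemma pair_neq n (i : 'I_n.-1) (a b : 'I_n) :
  ((a, b) != (ordl i, ordr i)) = ~~ ((val a == val i) && (val b == (val i).+1)).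
Proof. by rewrite xpair_eqE. Qed.

Lemma L1 n (i : 'I_n.-1) (w : 'S_n) :
  (coxlen (sgen i * w)%g + (w (ordr i) < w (ordl i)) = coxlen w + (w (ordl i) < w (ordr i)))%N.
Proof.
set x0 := (ordl i, ordr i).
set phi := fun ij : 'I_n * 'I_n => (sgen i ij.1, sgen i ij.2).
have phi_inj : injective phi.
  by move=> [a b] [c d] [/perm_inj -> /perm_inj ->].
set A := [set ij : 'I_n * 'I_n | (ij.1 < ij.2)%N && (w ij.2 < w ij.1)%N].
set B := [set ij : 'I_n * 'I_n | (ij.1 < ij.2)%N && ((sgen i * w)%g ij.2 < (sgen i * w)%g ij.1)%N].
have eqBA : B :\ x0 = phi @^-1: (A :\ x0).
  apply/setP => [[a b]]; rewrite !inE /= !permM.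
  case h: (w (sgen i b) < w (sgen i a))%N; last by rewrite !andbF.
  have ab : val a <> val b by move=> /val_inj e; rewrite e ltnn in h.
  have := sw_pair (val i) ab; rewrite -!sgenE => [[H1 H2]].
  rewrite !andbT !pair_neq.
  apply/idP/idP => /andP[ne lt]; apply/andP.
  - have P1 : ~ (val a = val i /\ val b = (val i).+1) by move=> [e1 e2]; move: ne; rewrite e1 e2 !eqxx.
    have [l1 l2] := H1 (conj lt P1); split => //=.
    by apply/negP => /andP[/eqP e1 /eqP e2]; apply: l2.
  - have P1 : ~ (val (sgen i a) = val i /\ val (sgen i b) = (val i).+1).
      by move=> [e1 e2]; move: ne; rewrite /= e1 e2 !eqxx.
    have [l1 l2] := H2 (conj lt P1); split => //=.
    by apply/negP => /andP[/eqP e1 /eqP e2]; apply: l2.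
rewrite /coxlen -/A -/B (cardsD1 x0 A) (cardsD1 x0 B) eqBA card_preimset //.
rewrite !inE /= !permM /sgen tpermL tpermR /=.
rewrite ltnSn /=; lia.
Qed.

Lemma ordlr_neq n (i : 'I_n.-1) (w : 'S_n) : (nat_of_ord (w (ordl i)) != nat_of_ord (w (ordr i))).
Proof.
apply/negP => /eqP /val_inj /perm_inj /(congr1 val) /= /eqP.
by move=> /eqP; lia.
Qed.

Lemma L1up n (i : 'I_n.-1) (w : 'S_n) : (w (ordl i) < w (ordr i))%N ->
  coxlen (sgen i * w)%g = (coxlen w).+1.
Proof.
move=> h; have := L1 i w; rewrite h.
have -> : (w (ordr i) < w (ordl i))%N = false by apply/negbTE; rewrite -leqNgt ltnW.
by rewrite addn0 addn1.
Qed.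

Lemma L1dn n (i : 'I_n.-1) (w : 'S_n) : (w (ordr i) < w (ordl i))%N ->
  (coxlen (sgen i * w)%g).+1 = coxlen w.
Proof.
move=> h; have := L1 i w; rewrite h.
have -> : (w (ordl i) < w (ordr i))%N = false by apply/negbTE; rewrite -leqNgt ltnW.
by rewrite addn0 addn1.
Qed.

Lemma L1le n (i : 'I_n.-1) (w : 'S_n) : (coxlen (sgen i * w)%g <= (coxlen w).+1)%N.
Proof.
case: (ltngtP (w (ordl i)) (w (ordr i))) => h.
- by rewrite L1up.
- by rewrite -(L1dn h) ltnW.
- by move: (ordlr_neq i w); rewrite h eqxx.
Qed.

Lemma coxlen1 n : coxlen (1%g : 'S_n) = 0%N.
Proof.
apply/eqP; rewrite cards_eq0; apply/eqP/setP => ij; rewrite !inE !perm1.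
by case: ltngtP.
Qed.

Lemma wordprod_cons n (i : 'I_n.-1) s : wordprod (i :: s) = (sgen i * wordprod s)%g.
Proof. by []. Qed.

Lemma wordprod_cat n (s t : seq 'I_n.-1) : wordprod (s ++ t) = (wordprod s * wordprod t)%g.
Proof. by elim: s => [|i s IH] /=; rewrite ?mul1g // IH mulgA. Qed.

Lemma coxlen_le n (s : seq 'I_n.-1) : (coxlen (wordprod s) <= size s)%N.
Proof.
elim: s => [|i s IH] /=; first by rewrite coxlen1.
exact: leq_trans (L1le i _) _.
Qed.

Lemma incr_id n (w : 'S_n) : (forall i : 'I_n.-1, w (ordl i) < w (ordr i))%N -> w = 1%g.
Proof.
move=> H.
have c1 : forall k (x : 'I_n), val x = k -> (k <= w x)%N.
  elim=> [//|k IH] x hx.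
  have hk : (k < n.-1)%N by have := ltn_ord x; rewrite hx; case: (n) => //.
  have := H (Ordinal hk).
  have -> : ordr (Ordinal hk) = x by apply: val_inj.
  move=> h; have := IH (ordl (Ordinal hk)) erefl; lia.
have c2 : forall d (x : 'I_n), (n.-1 - x)%N = d -> (w x <= x)%N.
  elim=> [|d IH] x hx.
  - have := ltn_ord (w x); lia.
  - have hk : (x < n.-1)%N by lia.
    have := H (Ordinal hk).
    have -> : ordl (Ordinal hk) = x by apply: val_inj.
    move=> h; have := IH (ordr (Ordinal hk)); rewrite /= => h2.
    have := h2 ltac:(lia); lia.
apply/permP => x; rewrite perm1; apply: val_inj; apply/eqP.
by rewrite eqn_leq (c2 _ x erefl) (c1 _ x erefl).
Qed.

Lemma exists_word n k (w : 'S_n) : coxlen w = k -> exists s, size s = k /\ wordprod s = w.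
Proof.
elim: k w => [|k IH] w hw.
- exists [::]; split => //=; symmetry; apply: incr_id => i.
  case: (ltngtP (w (ordl i)) (w (ordr i))) => // h.
  + by have := L1dn h; rewrite hw.
  + by move: (ordlr_neq i w); rewrite h eqxx.
- case: (boolP [exists i : 'I_n.-1, w (ordr i) < w (ordl i)]%N).
  + move=> /existsP [i hi].
    have [s [hs ps]] := IH (sgen i * w)%g ltac:(have := L1dn hi; lia).
    exists (i :: s); split; first by rewrite /= hs.
    by rewrite wordprod_cons ps mulgA sgen2 mul1g.
  + move=> /existsPn hn.
    have : w = 1%g.
      apply: incr_id => i; have := hn i; have := ordlr_neq i w.
      case: ltngtP => //.
    by move=> e; move: hw; rewrite e coxlen1.
Qed.

Lemma rword_spec n (w : 'S_n) : size (rword w) = coxlen w /\ wordprod (rword w) = w.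
Proof.
rewrite /rword; case: pickP => [t /eqP ht | none].
- by rewrite size_tuple.
- have [s [hs ps]] := exists_word (erefl (coxlen w)).
  have hs' : size s == coxlen w by rewrite hs.
  by have := none (Tuple hs'); rewrite /= ps eqxx.
Qed.

Lemma desc_of n (i : 'I_n.-1) (w : 'S_n) :
  (coxlen (sgen i * w)%g < coxlen w)%N -> (w (ordr i) < w (ordl i))%N.
Proof.
case: (ltngtP (w (ordl i)) (w (ordr i))) => // h.
- by rewrite L1up // ltnNge leqnSn.
- by move: (ordlr_neq i w); rewrite h eqxx.
Qed.

Lemma reduced_cons n (i : 'I_n.-1) (s : seq 'I_n.-1) :
  coxlen (wordprod (i :: s)) = (size s).+1 ->
  coxlen (wordprod s) = size s /\
  (wordprod (i :: s) (ordr i) < wordprod (i :: s) (ordl i))%N.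
Proof.
move=> h.
have h1 := coxlen_le s.
have h2 := L1le i (wordprod s).
rewrite wordprod_cons in h h2 *.
have e : coxlen (wordprod s) = size s by lia.
split => //; apply: desc_of.
by rewrite mulgA sgen2 mul1g e h.
Qed.

Lemma wordop_cons n V (T : 'I_n.-1 -> V -> V) i s v : wordop T (i :: s) v = T i (wordop T s v).
Proof. by []. Qed.

Lemma wordop_cat n V (T : 'I_n.-1 -> V -> V) s t v : wordop T (s ++ t) v = wordop T s (wordop T t v).
Proof. by elim: s => [|i s IH] //=; rewrite IH. Qed.

Lemma sgen_fix n (i : 'I_n.-1) (z : 'I_n) : val z != val i -> val z != (val i).+1 -> sgen i z = z.
Proof. move=> h1 h2; apply: val_inj; rewrite sgenE /sw (negbTE h1) (negbTE h2) //. Qed.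

Lemma sgen_l n (i : 'I_n.-1) : sgen i (ordl i) = ordr i.
Proof. exact: tpermL. Qed.
Lemma sgen_r n (i : 'I_n.-1) : sgen i (ordr i) = ordl i.
Proof. exact: tpermR. Qed.

Lemma mats n V (T : 'I_n.-1 -> V -> V)
  (HTcomm : forall (i j : 'I_n.-1) v, ((i.+1 < j)%N || (j.+1 < i)%N) ->
      T i (T j v) = T j (T i v))
  (HTbraid : forall (i j : 'I_n.-1) v, val j = (val i).+1 ->
      T i (T j (T i v)) = T j (T i (T j v))) :
  forall k (s t : seq 'I_n.-1), size s = k -> size t = k ->
  coxlen (wordprod s) = k -> wordprod s = wordprod t ->
  forall v, wordop T s v = wordop T t v.
Proof.
elim=> [|k IH].
  by move=> [|? ?] [|? ?] //.
have adj : forall i j s' t', val j = (val i).+1 -> size s' = k -> size t' = k ->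
   coxlen (wordprod (i :: s')) = k.+1 -> wordprod (i :: s') = wordprod (j :: t') ->
   forall v, wordop T (i :: s') v = wordop T (j :: t') v.
  move=> i j s' t' hij hs ht hc he v.
  set w := wordprod (i :: s') in hc he.
  have [c1 d1] := reduced_cons (i:=i) (s:=s') ltac:(by rewrite -/w hc hs); rewrite -/w in d1.
  have hc' : coxlen (wordprod (j :: t')) = (size t').+1 by rewrite -he hc ht.
  have [c2 d2] := reduced_cons hc'; rewrite -he -/w in d2.
  have ws' : wordprod s' = (sgen i * w)%g by rewrite /w wordprod_cons mulgA sgen2 mul1g.
  have wt' : wordprod t' = (sgen j * w)%g by rewrite he wordprod_cons mulgA sgen2 mul1g.
  clearbody w.
  have ejl : ordl j = ordr i by apply: val_inj.
  have hij' : nat_of_ord j = (nat_of_ord i).+1 := hij.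
  have f1 : sgen i (ordr j) = ordr j by apply: sgen_fix; apply/eqP => /= e; lia.
  have f2 : sgen j (ordl i) = ordl i by apply: sgen_fix; apply/eqP => /= e; lia.
  have y1 : (coxlen (sgen j * (sgen i * w))%g).+1 = k.
    rewrite (L1dn (w := (sgen i * w)%g)); first by rewrite -ws' c1.
    rewrite !permM f1 ejl sgen_r; rewrite ejl in d2; lia.
  have y2 : (coxlen (sgen i * (sgen j * (sgen i * w)))%g).+1.+1 = k.
    rewrite (L1dn (w := (sgen j * (sgen i * w))%g)) //.
    rewrite !permM f2 sgen_l -ejl sgen_l f1; rewrite ejl in d2 *; lia.
  set x := (sgen i * (sgen j * (sgen i * w)))%g in y2.
  have [rs rp] := rword_spec x.
  rewrite !wordop_cons.
  have E1 : wordop T s' v = wordop T (j :: i :: rword x) v.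
    apply: IH => //=; first by rewrite rs; lia.
      by rewrite c1.
    by rewrite ws' rp /x !sgenK.
  have E2 : wordop T t' v = wordop T (i :: j :: rword x) v.
    apply: IH => //=; first by rewrite rs; lia.
      by rewrite c2.
    by rewrite wt' rp /x (sgen_braidK _ hij) !sgenK.
  rewrite E1 E2 /=.
  exact: HTbraid.
have far : forall (i j : 'I_n.-1) (s' t' : seq 'I_n.-1), (i.+1 < j)%N || (j.+1 < i)%N -> size s' = k -> size t' = k ->
   coxlen (wordprod (i :: s')) = k.+1 -> wordprod (i :: s') = wordprod (j :: t') ->
   forall v, wordop T (i :: s') v = wordop T (j :: t') v.
  move=> i j s' t' hij hs ht hc he v.
  set w := wordprod (i :: s') in hc he.
  have [c1 d1] := reduced_cons (i:=i) (s:=s') ltac:(by rewrite -/w hc hs); rewrite -/w in d1.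
  have hc' : coxlen (wordprod (j :: t')) = (size t').+1 by rewrite -he hc ht.
  have [c2 d2] := reduced_cons hc'; rewrite -he -/w in d2.
  have ws' : wordprod s' = (sgen i * w)%g by rewrite /w wordprod_cons mulgA sgen2 mul1g.
  have wt' : wordprod t' = (sgen j * w)%g by rewrite he wordprod_cons mulgA sgen2 mul1g.
  clearbody w.
  have hij' : ((nat_of_ord i).+1 < nat_of_ord j)%N || ((nat_of_ord j).+1 < nat_of_ord i)%N := hij.
  have f1 : sgen i (ordr j) = ordr j by apply: sgen_fix; apply/eqP => /= e; lia.
  have f2 : sgen i (ordl j) = ordl j by apply: sgen_fix; apply/eqP => /= e; lia.
  have y1 : (coxlen (sgen j * (sgen i * w))%g).+1 = k.
    rewrite (L1dn (w := (sgen i * w)%g)); first by rewrite -ws' c1.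
    by rewrite !permM f1 f2.
  set x := (sgen j * (sgen i * w))%g in y1.
  have [rs rp] := rword_spec x.
  rewrite !wordop_cons.
  have E1 : wordop T s' v = wordop T (j :: rword x) v.
    apply: IH => //=; first by rewrite rs; lia.
      by rewrite c1.
    by rewrite ws' rp /x !sgenK.
  have E2 : wordop T t' v = wordop T (i :: rword x) v.
    apply: IH => //=; first by rewrite rs; lia.
      by rewrite c2.
    by rewrite wt' rp /x (sgen_farK _ hij) !sgenK.
  rewrite E1 E2 /=.
  exact: HTcomm.
move=> [|i s'] [|j t'] //= [hs] [ht] hc he v.
case: (ltngtP (val i) (val j)) => hij.
- have [e|ne] := eqVneq (nat_of_ord j) (nat_of_ord i).+1.
  + exact: adj.
  + apply: far => //; apply/orP; left; move: ne => /eqP ne; have h1 : (nat_of_ord i < nat_of_ord j)%N := hij; lia.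
- have [e|ne] := eqVneq (nat_of_ord i) (nat_of_ord j).+1.
  + symmetry; apply: adj => //; first by rewrite /= -he hc.
  + apply: far => //; apply/orP; right; move: ne => /eqP ne; have h1 : (nat_of_ord j < nat_of_ord i)%N := hij; lia.
- have eij : i = j by apply: val_inj.
  subst j.
  have [c1 _] := reduced_cons (i:=i) (s:=s') ltac:(by rewrite hc hs).
  rewrite (IH s' t') //; first by rewrite c1.
  by move: he => /mulgI.
Qed.

Lemma wordprod_rev n (s : seq 'I_n.-1) : wordprod (rev s) = (wordprod s)^-1%g.
Proof.
elim: s => [|i s IH]; first by rewrite /= invg1.
by rewrite rev_cons -cats1 wordprod_cat IH /= mulg1 invMg sgenV.
Qed.

Lemma coxlen_inv n (w : 'S_n) : coxlen w^-1%g = coxlen w.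
Proof.
have le : forall u : 'S_n, (coxlen u^-1%g <= coxlen u)%N.
  move=> u; have [rs rp] := rword_spec u.
  by rewrite -{1}rp -wordprod_rev -rs -(size_rev (rword u)) coxlen_le.
by apply/eqP; rewrite eqn_leq le /=; have := le w^-1%g; rewrite invgK.
Qed.

Definition Npairs n := #|[set ij : 'I_n * 'I_n | (ij.1 < ij.2)%N]|.

Lemma coxlen_w0 n (c : 'S_n) : (coxlen (c * w0 n)%g + coxlen c)%N = Npairs n.
Proof.
set P := [set ij : 'I_n * 'I_n | (ij.1 < ij.2)%N].
set A := [set ij : 'I_n * 'I_n | (ij.1 < ij.2)%N && (c ij.2 < c ij.1)%N].
have e1 : [set ij : 'I_n * 'I_n | (ij.1 < ij.2)%N && ((c * w0 n)%g ij.2 < (c * w0 n)%g ij.1)%N] = P :\: A.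
  apply/setP => [[a b]]; rewrite !inE /= !permM /w0 !permE /=.
  case: (ltnP a b) => //= hab.
  have ne : nat_of_ord (c a) != nat_of_ord (c b).
    by apply/negP => /eqP /val_inj /perm_inj e; rewrite e ltnn in hab.
  have := ltn_ord (c a); have := ltn_ord (c b); move: ne.
  case: ltngtP => h //; lia.
have e2 : P :&: A = A by apply/setIidPr/subsetP => ij; rewrite !inE => /andP[].
rewrite /coxlen e1 -/A -{2}e2 addnC cardsID //.
Qed.

Local Open Scope ring_scope.

Lemma ev_props (F : fieldType) (V : lmodType F) (ev : V -> F)
  (Hev_lin : forall (a : F) (u v : V), ev (a *: u + v) = a * ev u + ev v) :
  [/\ ev 0 = 0, forall u v, ev (u + v) = ev u + ev v & forall a u, ev (a *: u) = a * ev u].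
Proof.
have e0 : ev 0 = 0.
  have := Hev_lin 1 0 0; rewrite scaler0 addr0 mul1r.
  by rewrite -{1}[ev 0]addr0 => /addrI ->.
split => //.
- by move=> u v; have := Hev_lin 1 u v; rewrite scale1r mul1r.
- by move=> a u; have := Hev_lin a u 0; rewrite addr0 e0 addr0.
Qed.

Lemma wordop_lin n (F : fieldType) (V : lmodType F) (T : 'I_n.-1 -> V -> V)
  (lin : forall i a u v, T i (a *: u + v) = a *: T i u + T i v) s :
  forall a u v, wordop T s (a *: u + v) = a *: wordop T s u + wordop T s v.
Proof. by elim: s => [|i s IH] a u v //=; rewrite IH lin. Qed.

Lemma Tbar_lin n (F : fieldType) (V : lmodType F) (T : 'I_n.-1 -> V -> V) (p q : F)
  (lin : forall i a u v, T i (a *: u + v) = a *: T i u + T i v) :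
  forall i a u v, Tbar p q T i (a *: u + v) = a *: Tbar p q T i u + Tbar p q T i v.
Proof.
move=> i a u v; rewrite /Tbar lin scalerDr scalerDr !scalerA mulrC.
by rewrite !addrA; congr (_ + _); rewrite addrAC.
Qed.

Lemma quad_eq (F : fieldType) (V : lmodType F) (f : V -> V) (p q : F)
  (lin : forall a u v, f (a *: u + v) = a *: f u + f v) z :
  f (f z - q *: z) + p *: (f z - q *: z) = 0 ->
  f (f z) + (p - q) *: f z = (p * q) *: z.
Proof.
have fB : forall u v, f (u - q *: v) = f u - q *: f v.
  move=> u v; rewrite addrC -scaleNr lin scaleNr addrC //.
rewrite fB => H.
have E : f (f z) + (p - q) *: f z - (p * q) *: z = f (f z) - q *: f z + p *: (f z - q *: z).
  by rewrite scalerBl scalerBr scalerA !addrA; congr (_ + _); rewrite addrAC.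
by apply/eqP; rewrite -subr_eq0 E H.
Qed.

Lemma main_gen (F : fieldType) (p q : F) (n : nat) (V : lmodType F)
  (T : 'I_n.-1 -> V -> V)
  (lin : forall i a u v, T i (a *: u + v) = a *: T i u + T i v)
  (HTquad : forall i v, T i (T i v - q *: v) + p *: (T i v - q *: v) = 0)
  (HTcomm : forall (i j : 'I_n.-1) v, ((i.+1 < j)%N || (j.+1 < i)%N) ->
      T i (T j v) = T j (T i v))
  (HTbraid : forall (i j : 'I_n.-1) v, val j = (val i).+1 ->
      T i (T j (T i v)) = T j (T i (T j v)))
  (Yw0 : V)
  (Hspan : forall v : V, exists c : 'S_n -> F,
      v = \sum_(w : 'S_n) c w *: Ycl T Yw0 w)
  (ev : V -> F)
  (Hev_lin : forall (a : F) (u v : V), ev (a *: u + v) = a * ev u + ev v)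
  (Hev_Y : forall w : 'S_n, (ev (Ycl T Yw0 w) != 0) = (w == 1%g)) :
  (forall u v : 'S_n,
     ev (Tperm (Tbar p q T) u (Ycl T Yw0 v)) =
       (if u == v then ev (Ycl T Yw0 1%g) else 0))
  /\
  (forall Y : V,
     Y = (ev (Ycl T Yw0 1%g))^-1 *:
           \sum_(w : 'S_n) ev (Tperm (Tbar p q T) w Y) *: Ycl T Yw0 w).
Proof.
set Z := fun a => Tperm T a Yw0.
have up : forall i a, coxlen (sgen i * a)%g = (coxlen a).+1 -> T i (Z a) = Z (sgen i * a)%g.
  move=> i a h; rewrite /Z /Tperm.
  have [rs rp] := rword_spec a; have [rs' rp'] := rword_spec (sgen i * a)%g.
  change (T i (wordop T (rword a) Yw0)) with (wordop T (i :: rword a) Yw0).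
  apply: (mats HTcomm HTbraid (k := coxlen (sgen i * a)%g)) => //=.
  - by rewrite rs h.
  - by rewrite rp.
  - by rewrite rp rp'.
have dn : forall i a, (coxlen (sgen i * a)%g).+1 = coxlen a -> Z a = T i (Z (sgen i * a)%g).
  by move=> i a h; rewrite up ?sgenK // sgenK h.
set Tb := Tbar p q T.
have Tbup : forall i a, coxlen (sgen i * a)%g = (coxlen a).+1 ->
    Tb i (Z a) = Z (sgen i * a)%g + (p - q) *: Z a.
  by move=> i a h; rewrite /Tb /Tbar up.
have Tbdn : forall i a, (coxlen (sgen i * a)%g).+1 = coxlen a ->
    Tb i (Z a) = (p * q) *: Z (sgen i * a)%g.
  move=> i a h; rewrite /Tb /Tbar (dn i a h).
  by apply: quad_eq => //; apply: lin.
have [e0 eD eZ] := ev_props Hev_lin.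
have WL := wordop_lin (Tbar_lin p q lin).
have W0 : forall s, wordop Tb s 0 = 0.
  move=> s; have := WL s (-1) 0 0; rewrite scaler0 addr0 scaleN1r addNr //.
have WD : forall s u v, wordop Tb s (u + v) = wordop Tb s u + wordop Tb s v.
  by move=> s u v; rewrite -[u]scale1r WL !scale1r.
have WZ : forall s a u, wordop Tb s (a *: u) = a *: wordop Tb s u.
  by move=> s a u; rewrite -[a *: u]addr0 WL W0 addr0.
set E := ev (Z (w0 n)).
have base : forall a, ev (Z a) = if a == w0 n then E else 0.
  move=> a; have := Hev_Y ((a * (w0 n)^-1)^-1)%g.
  rewrite /Ycl invgK mulgVK -/(Z a) invg_eq1 divg_eq1.
  by case: (a =P w0 n) => [-> //|_] /negbFE/eqP.
have J : forall s, size s = coxlen (wordprod s) -> forall a,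
    ev (wordop Tb s (Z a)) = if a == ((wordprod s)^-1 * w0 n)%g then E else 0.
  elim/last_ind => [|s0 i IH] hs a.
    by rewrite /= invg1 mul1g; exact: base.
  have wp : wordprod (rcons s0 i) = (wordprod s0 * sgen i)%g.
    by rewrite -cats1 wordprod_cat /= mulg1.
  rewrite wp size_rcons in hs *.
  set u0 := wordprod s0 in hs *.
  have hu : coxlen u0 = size s0.
    have h1 : (coxlen u0 <= size s0)%N := coxlen_le s0.
    have h2 := L1le i u0^-1%g.
    move: h2; rewrite -sgenV -invMg !coxlen_inv -/u0 => h2; apply/eqP; rewrite eqn_leq h1 /= -ltnS hs; exact: h2.
  have cu : coxlen (u0 * sgen i)%g = (coxlen u0).+1 by rewrite -hs hu.
  have IH' := IH (esym hu).
  rewrite -cats1 wordop_cat /=.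
  have cond : (sgen i * a == u0^-1 * w0 n)%g = (a == (u0 * sgen i)^-1 * w0 n)%g.
    rewrite invMg sgenV -mulgA; apply/eqP/eqP => [<-|->]; by rewrite sgenK.
  have N1 := coxlen_w0 (sgen i * a)%g.
  have N2 := coxlen_w0 a.
  have N3 := coxlen_w0 u0^-1%g.
  have N4 := coxlen_w0 (u0 * sgen i)^-1%g.
  rewrite !coxlen_inv in N3 N4.
  case: (ltngtP (a (ordl i)) (a (ordr i))) => hd.
  - have hc := L1up hd.
    rewrite Tbup // WD WZ eD eZ !IH' cond.
    have -> : (a == u0^-1 * w0 n)%g = false.
      apply/negbTE/eqP => e.
      have ea : ((u0 * sgen i)^-1 * w0 n = sgen i * a)%g by rewrite e invMg sgenV mulgA.
      rewrite ea in N4; rewrite -e in N3; lia.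
    by rewrite mulr0 addr0.
  - have hc := L1dn hd.
    rewrite Tbdn // WZ eZ IH' cond.
    have -> : (a == (u0 * sgen i)^-1 * w0 n)%g = false.
      apply/negbTE/eqP => e.
      have eb : (u0^-1 * w0 n = sgen i * a)%g by rewrite e invMg sgenV -mulgA sgenK.
      rewrite eb in N3; rewrite -e in N4; lia.
    by rewrite mulr0.
  - by move: (ordlr_neq i a); rewrite hd eqxx.
have EY1 : ev (Ycl T Yw0 1%g) = E by rewrite /Ycl invg1 mul1g.
have P1 : forall u v : 'S_n,
     ev (Tperm Tb u (Ycl T Yw0 v)) = (if u == v then ev (Ycl T Yw0 1%g) else 0).
  move=> u v; have [rs rp] := rword_spec u.
  rewrite /Tperm EY1 (J (rword u)) ?rp ?rs //.
  by rewrite (inj_eq (mulIg _)) eqg_inv eq_sym.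
split => // Y.
have [c ->] := Hspan Y.
have EN : E != 0 by rewrite -EY1 Hev_Y.
have coef : forall w, ev (Tperm Tb w (\sum_(v : 'S_n) c v *: Ycl T Yw0 v)) = c w * E.
  move=> w; rewrite /Tperm (big_morph _ (WD _) (W0 _)) (big_morph _ eD e0).
  rewrite (bigD1 w) //= WZ eZ P1 eqxx EY1 big1 ?addr0 // => v ne.
  by rewrite WZ eZ P1 eq_sym (negbTE ne) mulr0.
rewrite EY1 scaler_sumr; apply: eq_bigr => w _.
by rewrite coef scalerA mulrCA mulVf // mulr1.
Qed.


Unset Implicit Arguments.

Theorem proposition3p7
  (F : fieldType) (Fchar0 : [pchar F] =i pred0)
  (p q hb : F) (n : nat) (t : 'I_n -> F)
  (V : lmodType F)
  (T : 'I_n.-1 -> {linear V -> V}) (x : 'I_n -> {linear V -> V})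
  (* Hecke quadratic relation (T_i + p)(T_i - q) = 0 *)
  (HTquad : forall i v, T i (T i v - q *: v) + p *: (T i v - q *: v) = 0)
  (* far commutation *)
  (HTcomm : forall (i j : 'I_n.-1) v, ((i.+1 < j)%N || (j.+1 < i)%N) ->
      T i (T j v) = T j (T i v))
  (* braid relation *)
  (HTbraid : forall (i j : 'I_n.-1) v, val j = (val i).+1 ->
      T i (T j (T i v)) = T j (T i (T j v)))
  (Hxcomm : forall i j v, x i (x j v) = x j (x i v))
  (HTx : forall (i : 'I_n.-1) (j : 'I_n) v, j != ordl i -> j != ordr i ->
      T i (x j v) = x j (T i v))
  (HTxi : forall (i : 'I_n.-1) v,
      T i (x (ordl i) v) = x (ordr i) (T i v) + (hb *: v - (p - q) *: x (ordl i) v))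
  (HTxi1 : forall (i : 'I_n.-1) v,
      T i (x (ordr i) v) = x (ordl i) (T i v) - (hb *: v - (p - q) *: x (ordl i) v))
  (Yw0 : V)
  (* the Y_w form a basis of V *)
  (Hfree : forall c : 'S_n -> F,
      \sum_(w : 'S_n) c w *: Ycl T Yw0 w = 0 -> forall w, c w = 0)
  (Hspan : forall v : V, exists c : 'S_n -> F,
      v = \sum_(w : 'S_n) c w *: Ycl T Yw0 w)
  (ev : V -> F)
  (Hev_lin : forall (a : F) (u v : V), ev (a *: u + v) = a * ev u + ev v)
  (Hev_Y : forall w : 'S_n, (ev (Ycl T Yw0 w) != 0) = (w == 1%g))
  (Hev_x : forall (i : 'I_n) (w : 'S_n),
      ev (x i (Ycl T Yw0 w)) = t i * ev (Ycl T Yw0 w)) :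
  (forall u v : 'S_n,
     ev (Tperm (Tbar p q (fun i => T i)) u (Ycl T Yw0 v)) =
       (if u == v then ev (Ycl T Yw0 1%g) else 0))
  /\
  (forall Y : V,
     Y = (ev (Ycl T Yw0 1%g))^-1 *:
           \sum_(w : 'S_n) ev (Tperm (Tbar p q (fun i => T i)) w Y) *: Ycl T Yw0 w).

Proof.
apply: (main_gen (T := fun i => T i) _ HTquad HTcomm HTbraid Hspan Hev_lin Hev_Y).
by move=> i a u v; rewrite linearP.
Qed.
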